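(* Consider any instance with $n$ agents with monotone valuations and $m=n+2$ goods. For each agent $i\in N$ there exists an EFX allocation $\mathcal{A}=(A_1,\dots,A_n)$ in which every agent receives at least one good and either (1) $|A_i|=3$; or (2) there is an agent $j\neq i$ with $|A_i|=|A_j|=2$ such that for some $k\in\{i,j\}$, agent $k$ receives a good $g\in A_k$ with $v_k(\{g\})\ge v_k(\{g'\})$ for all $g'\in A_i\cup A_j$. *)

(* Defs.v *)
From mathcomp Require Import all_boot all_order all_algebra.
Set Implicit Arguments. Unset Strict Implicit. Unset Printing Implicit Defensive.
Import Order.TTheory GRing.Theory Num.Theory.
Local Open Scope ring_scope.

Definition valuation (R : numDomainType) (n m : nat) :=
  'I_n -> {set 'I_m} -> R.

Definition monotone_valuations (R : numDomainType) (n m : nat)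
    (v : valuation R n m) : Prop :=
  (forall i, v i set0 = 0) /\
  (forall i (S T : {set 'I_m}), S \subset T -> v i S <= v i T).

Definition allocation (n m : nat) (A : 'I_n -> {set 'I_m}) : Prop :=
  (forall i j, i != j -> [disjoint A i & A j]) /\
  (forall g : 'I_m, exists i, g \in A i).

Definition EFX (R : numDomainType) (n m : nat) (v : valuation R n m)
    (A : 'I_n -> {set 'I_m}) : Prop :=
  forall i j, forall g, g \in A j -> v i (A j :\ g) <= v i (A i).

Definition EFX_allocation (R : numDomainType) (n m : nat) (v : valuation R n m)
    (A : 'I_n -> {set 'I_m}) : Prop :=
  allocation A /\ EFX v A.

(* Main.v *)
Require Import Defs.
From mathcomp Require Import all_boot all_order all_algebra zify.
Import Order.TTheory GRing.Theory Num.Theory.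
Set Implicit Arguments. Unset Strict Implicit. Unset Printing Implicit Defensive.
Local Open Scope ring_scope.

Section SD.
Variables (R : realDomainType) (n : nat) (v : valuation R n (n + 2)).
Local Notation G := 'I_(n + 2).

Definition sv a (x : G) := v a [set x].
Definition rk a (x : G) : nat := addn (muln #|[set y : G | sv a y < sv a x]| (n + 2)) x.

Lemma rk_lt a x y : sv a x < sv a y -> (rk a x < rk a y)%N.
Proof.
move=> H.
have sub: [set z | sv a z < sv a x] \proper [set z | sv a z < sv a y].
  apply/properP; split.
    by apply/subsetP => z; rewrite !inE => h; exact: lt_trans h H.
  by exists x; rewrite !inE ?ltxx.
have := proper_card sub; have := ltn_ord x; have := ltn_ord y; rewrite /rk.
set A := #|_|; set B := #|_|. nia.
Qed.

Lemma rk_inj a : injective (rk a).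
Proof.
move=> x y; rewrite /rk => E; apply: val_inj => /=.
move: E; set c1 := #|_|; set c2 := #|_|.
have := ltn_ord x; have := ltn_ord y.
case: (ltngtP c1 c2) => h; nia.
Qed.

Lemma rk_le a x y : (rk a x <= rk a y)%N -> sv a x <= sv a y.
Proof. by move=> h; rewrite leNgt; apply/negP => /rk_lt; rewrite ltnNge h. Qed.

Lemma lt0n2 : (0 < n + 2)%N. Proof. by rewrite addn2. Qed.
Definition x0 : G := Ordinal lt0n2.

Definition best a (S : {set G}) : G :=
  odflt x0 [pick x in S | [forall y in S, (rk a y <= rk a x)%N]].

Lemma bestP a S : S != set0 ->
  best a S \in S /\ forall y, y \in S -> (rk a y <= rk a (best a S))%N.
Proof.
move=> /set0Pn [z zS]; rewrite /best.
case: pickP => [x /andP [xS /forallP h]|none] /=.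
  by split=> // y yS; have := h y; rewrite yS.
exfalso; case: (@arg_maxnP _ z (mem S) (rk a) zS) => x xS hx.
have := none x; rewrite /= (_ : x \in S = true) //=; move/negP; apply; apply/forallP => y.
by apply/implyP => yS; apply: hx.
Qed.

Lemma best_in a (S : {set G}) : S != set0 -> best a S \in S.
Proof. by case/(bestP a). Qed.

Lemma best_max a (S : {set G}) y : y \in S -> sv a y <= sv a (best a S).
Proof.
move=> yS; have ne : S != set0 by apply/set0Pn; exists y.
by apply: rk_le; case: (bestP a ne) => _; apply.
Qed.

Lemma best_U a e (X : {set G}) : best a (e |: X) != e -> best a (e |: X) = best a X.
Proof.
move=> ne.
have ne1 : e |: X != set0 by apply/set0Pn; exists e; rewrite !inE eqxx.
have [bin bmax] := bestP a ne1.
have bX : best a (e |: X) \in X by move: bin; rewrite !inE (negbTE ne).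
have neX : X != set0 by apply/set0Pn; exists (best a (e |: X)).
have [b'in b'max] := bestP a neX.
apply: (@rk_inj a); apply/eqP; rewrite eqn_leq b'max ?andbT //.
by apply: bmax; rewrite !inE b'in orbT.
Qed.

Fixpoint sdpool (s : seq 'I_n) (S : {set G}) : {set G} :=
  if s is a :: s' then sdpool s' (S :\ best a S) else S.

Fixpoint sdpick (s : seq 'I_n) (S : {set G}) (m : 'I_n) : G :=
  if s is a :: s' then (if a == m then best a S else sdpick s' (S :\ best a S) m)
  else x0.

Lemma sdpool_sub s (S : {set G}) : sdpool s S \subset S.
Proof.
elim: s S => [|a s IH] S /=; first exact: subxx.
apply: subset_trans (IH _) _; exact: subD1set.
Qed.

Lemma sdpool_card s (S : {set G}) : (size s <= #|S|)%N -> #|sdpool s S| = (#|S| - size s)%N.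
Proof.
elim: s S => [|a s IH] S /=; first by rewrite subn0.
move=> h; have ne : S != set0 by rewrite -card_gt0; move: h; rewrite /=; lia.
have hc := cardsD1 (best a S) S; rewrite best_in // add1n in hc.
rewrite IH; move: h; rewrite /= hc; set k := #|_|; lia.
Qed.

Lemma sdpool_cat s1 s2 (S : {set G}) : sdpool (s1 ++ s2) S = sdpool s2 (sdpool s1 S).
Proof. by elim: s1 S => //= a s1 IH S. Qed.

Lemma sdpick_mid s1 m s2 (S : {set G}) : m \notin s1 ->
  sdpick (s1 ++ m :: s2) S m = best m (sdpool s1 S).
Proof.
elim: s1 S => [|a s1 IH] S /=; first by rewrite eqxx.
rewrite inE negb_or => /andP [ne nin]; rewrite eq_sym (negbTE ne); exact: IH.
Qed.

Lemma sdpick_in s (S : {set G}) m : m \in s -> (size s <= #|S|)%N ->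
  sdpick s S m \in S /\ sdpick s S m \notin sdpool s S.
Proof.
elim: s S => [|a s IH] S //=; rewrite inE => hm h.
have ne : S != set0 by rewrite -card_gt0; move: h; rewrite /=; lia.
case: eqP => [->|ne2].
  split; first exact: best_in.
  apply/negP => /(subsetP (sdpool_sub _ _)); by rewrite !inE eqxx.
have hm' : m \in s by case/orP: hm => // /eqP E; case: ne2; rewrite E.
have hc := cardsD1 (best a S) S; rewrite best_in // add1n in hc.
have [h1 h2] := IH (S :\ best a S) hm' ltac:(move: h; rewrite /= hc; set k := #|_|; lia).
by split=> //; move: h1; rewrite !inE => /andP [].
Qed.

Lemma sdpick_inj s (S : {set G}) m1 m2 : uniq s -> m1 \in s -> m2 \in s -> m1 != m2 ->
  (size s <= #|S|)%N -> sdpick s S m1 != sdpick s S m2.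
Proof.
elim: s S => [|a s IH] S //=; rewrite !inE => /andP [ans us] h1 h2 ne hs.
have neS : S != set0 by rewrite -card_gt0; move: hs; rewrite /=; lia.
have hc := cardsD1 (best a S) S; rewrite best_in // add1n in hc.
have hs' : (size s <= #|S :\ best a S|)%N by move: hs; rewrite /= hc; set k := #|_|; lia.
case: (eqVneq a m1) => [E1|N1]; case: (eqVneq a m2) => [E2|N2].
- by move: ne; rewrite -E1 -E2 eqxx.
- have m2s : m2 \in s by case/orP: h2 => // /eqP E; case/eqP: N2; rewrite E.
  have [p1 _] := @sdpick_in s (S :\ best a S) m2 m2s hs'.
  by apply/eqP => E; move: p1; rewrite -E !inE eqxx.
- have m1s : m1 \in s by case/orP: h1 => // /eqP E; case/eqP: N1; rewrite E.
  have [p1 _] := @sdpick_in s (S :\ best a S) m1 m1s hs'.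
  by apply/eqP => E; move: p1; rewrite E !inE eqxx.
- have m1s : m1 \in s by case/orP: h1 => // /eqP E; case/eqP: N1; rewrite E.
  have m2s : m2 \in s by case/orP: h2 => // /eqP E; case/eqP: N2; rewrite E.
  exact: IH.
Qed.

Lemma sdpick_robust s (S : {set G}) m x : m \in s -> x \in sdpool s S ->
  sv m x <= sv m (sdpick s S m).
Proof.
elim: s S => [|a s IH] S //=; rewrite inE => hm hx.
case: eqP => [E|ne2].
  rewrite -E; apply: best_max.
  by move/(subsetP (sdpool_sub _ _)): hx; rewrite !inE => /andP [].
have hm' : m \in s by case/orP: hm => // /eqP E; case: ne2; rewrite E.
exact: IH.
Qed.

Lemma sdpick_cover s (S : {set G}) x : uniq s -> x \in S ->
  x \in sdpool s S \/ exists2 m, m \in s & sdpick s S m = x.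
Proof.
elim: s S => [|a s IH] S //=; first by left.
move=> /andP [ans us] xS; case: (eqVneq x (best a S)) => [E|ne].
  by right; exists a; rewrite ?inE ?eqxx.
have : x \in S :\ best a S by rewrite !inE ne.
case/(IH _ us) => [|[m ms E]]; first by left.
have am : a != m by apply/eqP => am; move: ans; rewrite am ms.
by right; exists m; rewrite ?inE ?ms ?orbT // (negbTE am).
Qed.

Lemma sdpool_U s e (X : {set G}) : e \notin X -> (size s <= #|X|)%N ->
  exists z, [/\ z \in e |: X, z \notin sdpool s X & sdpool s (e |: X) = z |: sdpool s X].
Proof.
elim: s e X => [|a s IH] e X /= eX h.
  by exists e; rewrite !inE eqxx.
have neX : X != set0 by rewrite -card_gt0; move: h; rewrite /=; lia.
have b'X := best_in a neX.
have hc := cardsD1 (best a X) X; rewrite b'X add1n in hc.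
have h' : (size s <= #|X :\ best a X|)%N by move: h; rewrite /= hc; set k := #|_|; lia.
have nb : best a X \notin X :\ best a X by rewrite !inE eqxx.
case: (eqVneq (best a (e |: X)) e) => Hb.
  rewrite Hb setU1K //.
  have [z [z1 z2 z3]] := IH _ _ nb h'.
  rewrite setD1K // in z1 z3.
  by exists z; split => //; rewrite !inE z1 orbT.
have E := best_U Hb; rewrite E.
have eX' : e \notin X :\ best a X by rewrite !inE negb_and eX orbT.
have [z [z1 z2 z3]] := IH _ _ eX' h'.
have -> : (e |: X) :\ best a X = e |: (X :\ best a X).
  apply/setP => y; rewrite !inE; case: (eqVneq y e) => [->|//].
  by rewrite andbT; apply/eqP => E2; move: Hb; rewrite E E2 eqxx.
exists z; split => //; move: z1; rewrite !inE; case/orP=> [->//|/andP [_ ->]]; by rewrite orbT.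
Qed.

Hypothesis hv : monotone_valuations v.
Variable i : 'I_n.

Lemma v0 a : v a set0 = 0. Proof. by case: hv. Qed.
Lemma vmono a (S T : {set G}) : S \subset T -> v a S <= v a T.
Proof. by case: hv => _; apply. Qed.
Lemma vge0 a (S : {set G}) : 0 <= v a S.
Proof. by rewrite -(v0 a); apply: vmono; exact: sub0set. Qed.
Lemma val_le a x (S : {set G}) : x \in S -> sv a x <= v a S.
Proof. by move=> h; apply: vmono; rewrite sub1set. Qed.

Lemma pair_minus (A : {set G}) g : #|A| = 2%N -> g \in A ->
  exists2 y, y \in A & A :\ g = [set y].
Proof.
move=> hA gA.
have /cards1P [y Ey] : #|A :\ g| == 1%N.
  by apply/eqP; have := cardsD1 g A; rewrite gA hA; set k := #|_|; lia.
exists y => //; have : y \in A :\ g by rewrite Ey set11.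
by rewrite inE => /andP [].
Qed.

Definition cond s0 q := [/\ uniq s0, i \notin s0, q \notin s0, q != i &
  forall a, a != i -> a != q -> a \in s0].

Lemma cond_n s0 q : cond s0 q -> (2 <= n)%N.
Proof.
case=> _ _ _ qi _; have := ltn_ord i; have := ltn_ord q.
have : nat_of_ord q != nat_of_ord i by [].
lia.
Qed.

Lemma cond_size s0 q : cond s0 q -> size s0 = (n - 2)%N.
Proof.
case=> us is0 qs0 qi hall.
have E : s0 =i [predC [set i; q]].
  move=> a; rewrite !inE; case: (eqVneq a i) => [->|ai]; first by rewrite (negbTE is0).
  case: (eqVneq a q) => [->|aq]; first by rewrite (negbTE qs0).
  by rewrite hall.
rewrite -(card_uniqP us) (eq_card E); have := cardC [set i; q].
rewrite cards2 eq_sym qi card_ord; set k := #|_|; lia.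
Qed.

Lemma cond_sz s0 q : cond s0 q -> (size s0 <= #|[set: G]|)%N.
Proof. by move=> c; rewrite cardsT card_ord (cond_size c); lia. Qed.

Lemma cardQ s0 q : cond s0 q -> #|sdpool s0 setT| = 4%N.
Proof.
move=> c; rewrite sdpool_card ?(cond_sz c) // cardsT card_ord (cond_size c).
have := cond_n c; lia.
Qed.

Definition alloc s0 q (Ai Aq : {set G}) : 'I_n -> {set G} :=
  fun m => if m == i then Ai else if m == q then Aq else [set sdpick s0 setT m].

Lemma cond_in s0 q m : cond s0 q -> m != i -> m != q -> m \in s0.
Proof. by case=> _ _ _ _; apply. Qed.

Lemma pick_notQ s0 q m : cond s0 q -> m \in s0 -> sdpick s0 setT m \notin sdpool s0 setT.
Proof. by move=> c ms; case: (sdpick_in ms (cond_sz c)). Qed.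

Lemma alloc_ok s0 q (Ai Aq : {set G}) : cond s0 q -> Ai :|: Aq = sdpool s0 setT ->
  [disjoint Ai & Aq] -> allocation (alloc s0 q Ai Aq).
Proof.
move=> c hU hD; have [us is0 qs0 qi hall] := c.
have sAi : Ai \subset sdpool s0 setT by rewrite -hU subsetUl.
have sAq : Aq \subset sdpool s0 setT by rewrite -hU subsetUr.
have pA m (A : {set G}) : A \subset sdpool s0 setT -> m != i -> m != q ->
    [disjoint [set sdpick s0 setT m] & A].
  move=> sA mi mq; rewrite disjoints1; apply/negP => /(subsetP sA).
  by apply/negP; apply: pick_notQ c (cond_in c mi mq).
split.
- move=> a b ab; rewrite /alloc.
  case: (eqVneq a i) => [ai|ai].
    case: (eqVneq b i) => [bi|bi]; first by move: ab; rewrite ai bi eqxx.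
    case: (eqVneq b q) => [bq|bq] //.
    by rewrite disjoint_sym; apply: pA.
  case: (eqVneq a q) => [aq|aq].
    case: (eqVneq b i) => [bi|bi]; first by rewrite disjoint_sym.
    case: (eqVneq b q) => [bq|bq]; first by move: ab; rewrite aq bq eqxx.
    by rewrite disjoint_sym; apply: pA.
  case: (eqVneq b i) => [bi|bi]; first by apply: pA.
  case: (eqVneq b q) => [bq|bq]; first by apply: pA.
  rewrite disjoints1 inE; apply: sdpick_inj => //; try exact: cond_in c _ _.
  exact: (cond_sz c).
- move=> g; case: (boolP (g \in sdpool s0 setT)) => gQ.
    move: gQ; rewrite -hU => /setUP [h|h].
      by exists i; rewrite /alloc eqxx.
    by exists q; rewrite /alloc eqxx (negbTE qi).
  case: (@sdpick_cover s0 setT g us (in_setT g)) => [h|[m ms E]]; first by rewrite h in gQ.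
  have mi : m != i by apply/eqP => E2; move: is0; rewrite -E2 ms.
  have mq : m != q by apply/eqP => E2; move: qs0; rewrite -E2 ms.
  by exists m; rewrite /alloc (negbTE mi) (negbTE mq) E set11.
Qed.

Lemma EFX_ok s0 q (Ai Aq : {set G}) : cond s0 q ->
  (forall m, m \in s0 -> forall g, g \in Ai -> v m (Ai :\ g) <= sv m (sdpick s0 setT m)) ->
  (forall m, m \in s0 -> forall g, g \in Aq -> v m (Aq :\ g) <= sv m (sdpick s0 setT m)) ->
  (forall g, g \in Aq -> v i (Aq :\ g) <= v i Ai) ->
  (forall g, g \in Ai -> v q (Ai :\ g) <= v q Aq) -> EFX v (alloc s0 q Ai Aq).
Proof.
move=> c h1 h2 h3 h4; have [us is0 qs0 qi hall] := c.
move=> a b g; rewrite /alloc.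
case: (eqVneq b i) => [_|bi].
  case: (eqVneq a i) => [->|ai] gA; first by apply: vmono; exact: subD1set.
  case: (eqVneq a q) => [->|aq]; first exact: h4.
  exact: h1 (cond_in c ai aq) _ gA.
case: (eqVneq b q) => [_|bq].
  case: (eqVneq a i) => [->|ai] gA; first exact: h3.
  case: (eqVneq a q) => [->|aq]; first by apply: vmono; exact: subD1set.
  exact: h2 (cond_in c ai aq) _ gA.
rewrite inE => /eqP ->; rewrite setDv v0; exact: vge0.
Qed.

Definition goalP := exists A : 'I_n -> {set G},
    EFX_allocation v A /\
    (forall k, A k != set0) /\
    (#|A i| = 3%N \/
     exists j : 'I_n, j != i /\ #|A i| = 2%N /\ #|A j| = 2%N /\
       exists k : 'I_n, (k = i \/ k = j) /\
         exists2 g, g \in A k &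
           forall g', g' \in A i :|: A j -> v k [set g'] <= v k [set g]).

Definition tt0 s0 q := best q (sdpool s0 setT).
Definition WW s0 q := sdpool s0 setT :\ tt0 s0 q.

Lemma t_in s0 q : cond s0 q -> tt0 s0 q \in sdpool s0 setT.
Proof. by move=> c; apply: best_in; rewrite -card_gt0 (cardQ c). Qed.

Lemma cardW s0 q : cond s0 q -> #|WW s0 q| = 3%N.
Proof.
move=> c; have := cardsD1 (tt0 s0 q) (sdpool s0 setT).
by rewrite (t_in c) (cardQ c) /WW; set k := #|_|; lia.
Qed.

Lemma shape_facts s0 q y : cond s0 q -> y \in WW s0 q ->
  [/\ (WW s0 q :\ y) :|: [set tt0 s0 q; y] = sdpool s0 setT,
      [disjoint WW s0 q :\ y & [set tt0 s0 q; y]],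
      #|WW s0 q :\ y| = 2%N & #|[set tt0 s0 q; y]| = 2%N].
Proof.
move=> c yW; have tQ := t_in c.
have yt : y != tt0 s0 q by move: yW; rewrite !inE => /andP [].
have yQ : y \in sdpool s0 setT by move: yW; rewrite !inE => /andP [].
split.
- apply/setP => x; rewrite /WW !inE.
  case: (eqVneq x (tt0 s0 q)) => [->|xt]; first by rewrite tQ /= orbT.
  case: (eqVneq x y) => [->|xy] /=; first by rewrite yQ.
  by rewrite ?orbF ?andbT.
- rewrite -setI_eq0; apply/eqP/setP => x; rewrite /WW !inE.
  case: (eqVneq x (tt0 s0 q)) => [->|xt] //=; first by rewrite andbF.
  by case: (eqVneq x y); rewrite ?andbF.
- by have := cardsD1 y (WW s0 q); rewrite yW (cardW c); set k := #|_|; lia.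
- by rewrite cards2 eq_sym yt.
Qed.

Lemma twotwo s0 q (Ai Aq : {set G}) : cond s0 q -> Ai :|: Aq = sdpool s0 setT ->
  [disjoint Ai & Aq] -> #|Ai| = 2%N -> #|Aq| = 2%N ->
  (forall y, y \in Aq -> sv i y <= v i Ai) ->
  (forall y, y \in Ai -> sv q y <= v q Aq) ->
  ((exists2 g, g \in Ai & forall g', g' \in sdpool s0 setT -> sv i g' <= sv i g) \/
   (exists2 g, g \in Aq & forall g', g' \in sdpool s0 setT -> sv q g' <= sv q g)) ->
  goalP.
Proof.
move=> c hU hD ci cq hi hq htop; have [us is0 qs0 qi hall] := c.
have sAi : Ai \subset sdpool s0 setT by rewrite -hU subsetUl.
have sAq : Aq \subset sdpool s0 setT by rewrite -hU subsetUr.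
have Ei : alloc s0 q Ai Aq i = Ai by rewrite /alloc eqxx.
have Eq : alloc s0 q Ai Aq q = Aq by rewrite /alloc (negbTE qi) eqxx.
exists (alloc s0 q Ai Aq); split; [split|split].
- exact: alloc_ok.
- apply: EFX_ok => //.
  + move=> m ms g gA; have [y yA ->] := pair_minus ci gA.
    by apply: sdpick_robust => //; apply: (subsetP sAi).
  + move=> m ms g gA; have [y yA ->] := pair_minus cq gA.
    by apply: sdpick_robust => //; apply: (subsetP sAq).
  + by move=> g gA; have [y yA ->] := pair_minus cq gA; apply: hi.
  + by move=> g gA; have [y yA ->] := pair_minus ci gA; apply: hq.
- move=> k; rewrite /alloc.
  case: (k == i); first by rewrite -card_gt0 ci.
  case: (k == q); first by rewrite -card_gt0 cq.
  by apply/set0Pn; exists (sdpick s0 setT k); rewrite set11.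
- right; exists q; rewrite Ei Eq; split=> //; split=> //; split=> //.
  case: htop => [[g gA hg]|[g gA hg]].
    by exists i; split; [left | exists g; rewrite ?Ei // hU].
  by exists q; split; [right | exists g; rewrite ?Eq // hU].
Qed.

Lemma shapeA s0 q y : cond s0 q -> y \in WW s0 q ->
  sv i (tt0 s0 q) <= v i (WW s0 q :\ y) -> sv i y <= v i (WW s0 q :\ y) -> goalP.
Proof.
move=> c yW h1 h2; have [hU hD c1 c2] := shape_facts c yW.
apply: (twotwo c hU hD c1 c2).
- by move=> z; rewrite !inE => /orP [] /eqP ->.
- move=> z zA; have zQ : z \in sdpool s0 setT by rewrite -hU inE zA.
  by apply: le_trans (best_max q zQ) (val_le _ _); rewrite !inE eqxx.
- right; exists (tt0 s0 q); first by rewrite !inE eqxx.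
  by move=> g' g'Q; apply: best_max.
Qed.

Lemma shapeB s0 q y : cond s0 q -> y \in WW s0 q ->
  sv q (tt0 s0 q) <= v q (WW s0 q :\ y) ->
  (forall g', g' \in sdpool s0 setT -> sv i g' <= sv i (tt0 s0 q)) -> goalP.
Proof.
move=> c yW h1 hmax; have [hU hD c1 c2] := shape_facts c yW.
have yQ : y \in sdpool s0 setT by move: yW; rewrite !inE => /andP [].
have hU' : [set tt0 s0 q; y] :|: (WW s0 q :\ y) = sdpool s0 setT by rewrite setUC.
have hD' : [disjoint [set tt0 s0 q; y] & WW s0 q :\ y] by rewrite disjoint_sym.
apply: (twotwo c hU' hD' c2 c1).
- move=> z zA; have zQ : z \in sdpool s0 setT by rewrite -hU' inE zA orbT.
  by apply: le_trans (hmax _ zQ) (val_le _ _); rewrite !inE eqxx.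
- move=> z; rewrite !inE => /orP [] /eqP -> //.
  by apply: le_trans h1; apply: best_max.
- left; exists (tt0 s0 q); first by rewrite !inE eqxx.
  exact: hmax.
Qed.

Lemma option1 s0 q : cond s0 q ->
  (forall m, m \in s0 -> forall g, g \in WW s0 q -> v m (WW s0 q :\ g) <= sv m (sdpick s0 setT m)) ->
  (forall g, g \in WW s0 q -> v q (WW s0 q :\ g) <= sv q (tt0 s0 q)) -> goalP.
Proof.
move=> c hm hq; have [us is0 qs0 qi hall] := c; have tQ := t_in c.
have hU : WW s0 q :|: [set tt0 s0 q] = sdpool s0 setT by rewrite setUC setD1K.
have hD : [disjoint WW s0 q & [set tt0 s0 q]].
  by rewrite disjoint_sym disjoints1 /WW !inE eqxx.
have Ei : alloc s0 q (WW s0 q) [set tt0 s0 q] i = WW s0 q by rewrite /alloc eqxx.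
exists (alloc s0 q (WW s0 q) [set tt0 s0 q]); split; [split|split].
- exact: alloc_ok.
- apply: EFX_ok => //.
  + by move=> m ms g; rewrite inE => /eqP ->; rewrite setDv v0 vge0.
  + by move=> g; rewrite inE => /eqP ->; rewrite setDv v0 vge0.
- move=> k; rewrite /alloc.
  case: (k == i); first by rewrite -card_gt0 (cardW c).
  case: (k == q); first by apply/set0Pn; exists (tt0 s0 q); rewrite set11.
  by apply/set0Pn; exists (sdpick s0 setT k); rewrite set11.
- by left; rewrite Ei (cardW c).
Qed.

Definition FF s0 q := [/\ forall y, y \in WW s0 q -> v q (WW s0 q :\ y) < sv q (tt0 s0 q),
  forall y, y \in WW s0 q -> v i (WW s0 q :\ y) < sv i (tt0 s0 q) &
  exists m, exists y0, [/\ m \in s0, y0 \in WW s0 q &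
     sv m (sdpick s0 setT m) < v m (WW s0 q :\ y0)]].

Lemma W_other s0 q x : cond s0 q -> exists2 y, y \in WW s0 q & y != x.
Proof.
move=> c; have /card_gt1P [a [b [aW bW ab]]] : (1 < #|WW s0 q|)%N by rewrite (cardW c).
case: (eqVneq a x) => [ax|ax]; last by exists a.
by exists b => //; rewrite -ax eq_sym.
Qed.

Lemma step s0 q : cond s0 q -> goalP \/ FF s0 q.
Proof.
move=> c; have tQ := t_in c.
have WQ y : y \in WW s0 q -> y \in sdpool s0 setT by rewrite !inE => /andP [].
case: (eqVneq (best i (sdpool s0 setT)) (tt0 s0 q)) => hx.
  have hmax g' : g' \in sdpool s0 setT -> sv i g' <= sv i (tt0 s0 q).
    by rewrite -hx; apply: best_max.
  case: (boolP [exists y in WW s0 q, sv q (tt0 s0 q) <= v q (WW s0 q :\ y)]).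
    by move/existsP => [y /andP [yW hy]]; left; exact: shapeB c yW hy hmax.
  move=> nB.
  case: (boolP [exists y in WW s0 q, sv i (tt0 s0 q) <= v i (WW s0 q :\ y)]).
    move/existsP => [y /andP [yW hy]]; left; apply: (shapeA c yW hy).
    exact: le_trans (hmax y (WQ y yW)) hy.
  move=> nA.
  case: (boolP [forall m, [forall g, (m \in s0) ==> (g \in WW s0 q) ==>
           (v m (WW s0 q :\ g) <= sv m (sdpick s0 setT m))]]) => [hall|nall].
    left; apply: option1 c _ _.
      by move=> m ms g gW; move/forallP: hall => /(_ m)/forallP/(_ g); rewrite ms gW.
    move=> g gW; move/existsPn: nB => /(_ g); rewrite gW /= -ltNge; exact: ltW.
  right; split.
  - by move=> y yW; move/existsPn: nB => /(_ y); rewrite yW /= -ltNge.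
  - by move=> y yW; move/existsPn: nA => /(_ y); rewrite yW /= -ltNge.
  move/forallPn: nall => [m]; move/forallPn => [g].
  rewrite negb_imply => /andP [ms]; rewrite negb_imply => /andP [gW].
  by rewrite -ltNge => h; exists m, g.
left.
have neQ : sdpool s0 setT != set0 by apply/set0Pn; exists (tt0 s0 q).
have xQ := best_in i neQ.
have xW : best i (sdpool s0 setT) \in WW s0 q by rewrite !inE hx xQ.
have [y yW yx] := W_other (best i (sdpool s0 setT)) c.
have xWy : best i (sdpool s0 setT) \in WW s0 q :\ y by rewrite in_setD1 eq_sym yx xW.
apply: (shapeA c yW).
  exact: le_trans (best_max i tQ) (val_le _ xWy).
exact: le_trans (best_max i (WQ y yW)) (val_le _ xWy).
Qed.

Lemma main N : forall s0 q, cond s0 q ->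
  (#|[set x | (sv i x < sv i (tt0 s0 q))%R]| < N)%N -> goalP.
Proof.
elim: N => [//|N IH] s0 q c hN.
case: (step c) => [//|[Fq Fi [m [y0 [ms y0W hm]]]]].
have [us is0 qs0 qi hall] := c.
have [s1 [s2 E]] : exists s1 s2, s0 = s1 ++ m :: s2.
  by case/splitPr: ms => s1 s2; exists s1, s2.
have := us; rewrite E (perm_uniq (permEl (perm_catCA s1 [:: m] s2))) /= => /andP [mn u12].
have mi : m != i by apply/eqP => E2; move: is0; rewrite -E2 ms.
have mq : m != q by apply/eqP => E2; move: qs0; rewrite -E2 ms.
have m1 : m \notin s1 by move: mn; rewrite mem_cat negb_or => /andP [].
set s0' := s1 ++ s2 ++ [:: q].
have c' : cond s0' m.
  rewrite /s0'; split.
  - rewrite catA cats1 rcons_uniq u12 andbT.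
    by move: qs0; rewrite E !mem_cat inE !negb_or => /and3P [-> _ ->].
  - rewrite !mem_cat inE (eq_sym i) (negbTE qi) orbF.
    by move: is0; rewrite E !mem_cat inE !negb_or => /and3P [-> _ ->].
  - by rewrite catA mem_cat negb_or mn inE mq.
  - exact: mi.
  - move=> a ai am; case: (eqVneq a q) => [->|aq]; first by rewrite !mem_cat inE eqxx !orbT.
    have := hall a ai aq; rewrite E !mem_cat inE (negbTE am) /=.
    by case/orP => ->; rewrite ?orbT.
set Ra := sdpool s1 setT.
have szs := cond_size c; rewrite E size_cat /= in szs.
have hn2 := cond_n c.
have hsz : (size s1 + size s2 + 3 = n)%N by clear -szs hn2; set a := size s1 in szs *; set b := size s2 in szs *; lia.
have hT : #|[set: G]| = (n + 2)%N by rewrite cardsT card_ord.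
have hs1T : (size s1 <= #|[set: G]|)%N by rewrite hT; clear -hsz; lia.
have cardRa : #|Ra| = (n + 2 - size s1)%N by rewrite /Ra (sdpool_card hs1T) hT.
have neRa : Ra != set0 by rewrite -card_gt0 cardRa; clear -hsz; lia.
have pmE : sdpick s0 setT m = best m Ra by rewrite E sdpick_mid.
have pmR : best m Ra \in Ra by exact: best_in.
have QE : sdpool s0 setT = sdpool s2 (Ra :\ best m Ra) by rewrite E sdpool_cat.
have WE : sdpool (s2 ++ [:: q]) (Ra :\ best m Ra) = WW s0 q.
  by rewrite sdpool_cat /= /WW /tt0 QE.
have nX : best m Ra \notin Ra :\ best m Ra by rewrite !inE eqxx.
have hc := cardsD1 (best m Ra) Ra; rewrite pmR add1n in hc.
have szX : (size (s2 ++ [:: q]) <= #|Ra :\ best m Ra|)%N.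
  rewrite size_cat /=; move: cardRa; rewrite hc; set k := #|_|; clear -hsz; set a := size s1 in hsz *; set b := size s2 in hsz *; lia.
have [z [z1 z2 z3]] := sdpool_U nX szX.
rewrite setD1K // WE in z1 z2 z3.
have Q'E : sdpool s0' setT = z |: WW s0 q by rewrite sdpool_cat -/Ra z3.
have hz : sv m z <= sv m (sdpick s0 setT m) by rewrite pmE; exact: best_max.
case: (step c') => [//|[Fq' _ _]].
have t'Q : tt0 s0' m \in z |: WW s0 q by rewrite -Q'E; exact: t_in.
have t'z : tt0 s0' m != z.
  apply/eqP => Ez.
  have W'E : WW s0' m = WW s0 q by rewrite /WW Q'E -/(tt0 s0' m) Ez setU1K.
  have := Fq' y0; rewrite W'E => /(_ y0W); rewrite Ez => h.
  have := lt_le_trans h (le_trans hz (ltW hm)); by rewrite ltxx.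
have t'W : tt0 s0' m \in WW s0 q.
  by move: t'Q; rewrite in_setU1 (negbTE t'z).
have [y yW yt] := W_other (tt0 s0' m) c.
have hlt : sv i (tt0 s0' m) < sv i (tt0 s0 q).
  apply: le_lt_trans (Fi y yW); apply: val_le; by rewrite in_setD1 eq_sym yt t'W.
apply: (IH s0' m c').
have hp : (#|[set x | (sv i x < sv i (tt0 s0' m))%R]| < #|[set x | (sv i x < sv i (tt0 s0 q))%R]|)%N.
  apply: proper_card; apply/properP; split.
    by apply/subsetP => x; rewrite !inE => h; exact: lt_trans h hlt.
  by exists (tt0 s0' m); rewrite !inE ?ltxx.
by apply: (leq_trans hp); rewrite -ltnS.
Qed.

Lemma final_goal : goalP.
Proof.
case: (ltnP n 2) => hn.
  have all_eq (a b : 'I_n) : a = b.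
    apply: val_inj => /=; move: (ltn_ord a) (ltn_ord b) hn; move: (nat_of_ord a) (nat_of_ord b) => x y; lia.
  exists (fun _ => setT); split; [split; [split|]|split].
  - by move=> a b; rewrite (all_eq a b) eqxx.
  - by move=> g; exists i; rewrite inE.
  - by move=> a b g _; rewrite (all_eq a b); apply: vmono; exact: subsetT.
  - by move=> k; apply/set0Pn; exists x0; rewrite inE.
  - left; rewrite cardsT card_ord; have := ltn_ord i; lia.
have h0 : (0 < n)%N by lia.
have h1 : (1 < n)%N by lia.
set q := if i == Ordinal h0 then Ordinal h1 else Ordinal h0.
have qi : q != i.
  rewrite /q; case: (eqVneq i (Ordinal h0)) => [E|ne]; last by rewrite eq_sym.
  by rewrite E.
set s0 := [seq a <- enum 'I_n | (a != i) && (a != q)].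
have c : cond s0 q.
  split.
  - by rewrite filter_uniq // enum_uniq.
  - by rewrite mem_filter eqxx.
  - by rewrite mem_filter eqxx andbF.
  - exact: qi.
  - by move=> a ai aq; rewrite mem_filter ai aq mem_enum.
exact: (main (N := #|[set x | sv i x < sv i (tt0 s0 q)]|.+1) c).
Qed.

End SD.

Theorem lemma7 (R : realDomainType) (n : nat) (v : valuation R n (n + 2))
    (hv : monotone_valuations v) (i : 'I_n) :
  exists A : 'I_n -> {set 'I_(n + 2)},
    EFX_allocation v A /\
    (forall k, A k != set0) /\
    (#|A i| = 3%N \/
     exists j : 'I_n, j != i /\ #|A i| = 2%N /\ #|A j| = 2%N /\
       exists k : 'I_n, (k = i \/ k = j) /\
         exists2 g, g \in A k &
           forall g', g' \in A i :|: A j -> v k [set g'] <= v k [set g]).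
Proof. exact: (@final_goal R n v hv i). Qed.
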